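(* Fix an integer $d\ge 1$, $h\in[0,1]$ with $hd\in\mathbb{Z}$, and $p\in(0,\tfrac12]$. Consider the binary node-classification setting described in the context, with training set containing nodes of both classes, and the heterophilous one-layer linear GNN $F'(\mathbf{X})=(\mathbf{X}\,\Vert\,\mathbf{A}\mathbf{X})\mathbf{W}$, where $\Vert$ is row-wise concatenation, so each node $i$ is represented by the $4$-dimensional row $\mathbf{u}_i=[\mathbf{x}_i,\ \sum_{j\in N_1(i)}\mathbf{x}_j]$ and $\mathbf{W}$ is $4\times 2$. Let $\mathbf{R}$ be the $2\times 4$ matrix whose rows are the (common) representation $\mathbf{u}^{(0)}$ of class-$0$ training nodes and the (common) representation $\mathbf{u}^{(1)}$ of class-$1$ training nodes, and let $\mathbf{W}=\mathbf{R}^{\top}(\mathbf{R}\mathbf{R}^{\top})^{-1}\begin{bmatrix}1&0\\0&1\end{bmatrix}$ (the minimum-norm solution of $\mathbf{u}_i\mathbf{W}=\mathbf{y}_i$ for all training nodes $i$; $\mathbf{R}\mathbf{R}^\top$ is invertible under these hypotheses). Let $t$ be a test node of class $0$ (so $\mathbf{y}_t=[1,0]$, $\mathbf{x}_t=[\tfrac12+p,\tfrac12-p]$) of degree $d$ with local homophily ratio $h_t=h+\alpha_t\in[0,1]$, i.e. exactly $h_t d$ of its $d$ neighbors have class $0$. Then the output logit vector $\mathbf{z}_t=\mathbf{u}_t\mathbf{W}$ satisfies $$\mathbf{z}_t=\mathbf{y}_t+b_1'\,[\alpha_t,\ -\alpha_t],\qquad b_1'=\frac{d^2(2h-1)}{1+d^2(2h-1)^2},$$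 equivalently $\mathbf{z}_t=\frac{1}{1+d^2(2h-1)^2}\big[\,1+d^2(2h-1)(h+h_t-1),\ \ d^2(2h-1)(h-h_t)\,\big]$.
   Context: Binary node classification on a simple graph $G$ with adjacency matrix $\mathbf{A}$. Each node $i$ has a class $y_i\in\{0,1\}$, one-hot label vector $\mathbf{y}_i=[1,0]$ if $y_i=0$ and $[0,1]$ if $y_i=1$, and feature vector $\mathbf{x}_i=[\tfrac12+p,\ \tfrac12-p]$ if $y_i=0$ and $\mathbf{x}_i=[\tfrac12-p,\ \tfrac12+p]$ if $y_i=1$, where $p\in[0,\tfrac12]$ is a fixed parameter. $\mathbf{X}$ is the matrix whose rows are the $\mathbf{x}_i$. The local homophily ratio of a node $t$ is the fraction of its neighbors having the same class as $t$. Standing assumption on the training set: every training node has degree exactly $d$ and local homophily ratio exactly $h$ (so it has $hd$ neighbors of its own class and $(1-h)d$ of the other class); consequently all class-$0$ training nodes share one representation $\mathbf{u}^{(0)}$ and all class-$1$ training nodes share one representation $\mathbf{u}^{(1)}$. $N_1(i)$ denotes the set of neighbors of $i$. $\alpha_t=h_t-h$ is the shift of the test node's local homophily from the global homophily $h$. *)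

(* Defs.v *)
From HB Require Import structures.
From mathcomp Require Import all_boot all_order all_algebra.
Set Implicit Arguments. Unset Strict Implicit. Unset Printing Implicit Defensive.
Import Order.TTheory GRing.Theory Num.Theory.
Local Open Scope ring_scope.

(* Graph: simple graph on a finite vertex type V, given by an edge relation
   [e : rel V] assumed symmetric and irreflexive.
   Classes: [cls i : bool], with [false] = class 0 and [true] = class 1. *)

Definition simple_graph (V : finType) (e : rel V) : Prop :=
  symmetric e /\ irreflexive e.

Definition nbrs (V : finType) (e : rel V) (i : V) : {set V} := [set j | e i j].

Definition degree (V : finType) (e : rel V) (i : V) : nat := #|nbrs e i|.

Definition local_homophily (R : realFieldType) (V : finType) (e : rel V)
  (cls : V -> bool) (i : V) : R :=
  #|[set j in nbrs e i | cls j == cls i]|%:R / (degree e i)%:R.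

Definition onehot (R : realFieldType) (b : bool) : 'rV[R]_2 :=
  if b then \row_(k < 2) (if k == 1 :> nat then 1 else 0)
  else \row_(k < 2) (if k == 0 :> nat then 1 else 0).

Definition feat (R : realFieldType) (p : R) (b : bool) : 'rV[R]_2 :=
  if b then \row_(k < 2) (if k == 0 :> nat then 1/2 - p else 1/2 + p)
  else \row_(k < 2) (if k == 0 :> nat then 1/2 + p else 1/2 - p).

Definition rep (R : realFieldType) (V : finType) (e : rel V) (cls : V -> bool)
  (p : R) (i : V) : 'rV[R]_(2 + 2) :=
  row_mx (feat p (cls i)) (\sum_(j in nbrs e i) feat p (cls j)).

Definition Rmat (R : realFieldType) (V : finType) (e : rel V) (cls : V -> bool)
  (p : R) (a b : V) : 'M[R]_(2, 2 + 2) :=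
  col_mx (rep e cls p a) (rep e cls p b).

Definition Wmin (R : realFieldType) (V : finType) (e : rel V) (cls : V -> bool)
  (p : R) (a b : V) : 'M[R]_(2 + 2, 2) :=
  let M := Rmat e cls p a b in M^T *m invmx (M *m M^T) *m 1%:M.

(* Main.v *)
Require Import Defs.
From HB Require Import structures.
From mathcomp Require Import all_boot all_order all_algebra ring lra.
Import Order.TTheory GRing.Theory Num.Theory.
Local Open Scope ring_scope.

Lemma det2 (R : comNzRingType) (A : 'M[R]_2) : \det A = A 0 0 * A 1 1 - A 0 1 * A 1 0.
Proof.
rewrite (expand_det_row _ 0) !big_ord_recl big_ord0 /cofactor !det_mx11 !mxE /=.
rewrite addr0 expr0 mul1r exprS expr0 mulr1 mulN1r mulrN.
congr (_ * A _ _ - _ * A _ _).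
all: try (by apply: val_inj).
by congr (A _ _); apply: val_inj.
Qed.

Lemma sum_feat (R : realFieldType) (V : finType) (e : rel V) (cls : V -> bool) (p : R) i :
  \sum_(j in nbrs e i) feat p (cls j) =
  (#|[set j in nbrs e i | cls j == cls i]|)%:R *: feat p (cls i) +
  (#|[set j in nbrs e i | cls j != cls i]|)%:R *: feat p (~~ cls i).
Proof.
rewrite (bigID (fun j => cls j == cls i)) /=.
congr (_ + _).
  rewrite (eq_bigr (fun=> feat p (cls i))); last by move=> j /andP[_ /eqP ->].
  by rewrite scaler_nat -sumr_const; apply: eq_bigl => j; rewrite inE.
rewrite (eq_bigr (fun=> feat p (~~ cls i))); last first.
  by move=> j /andP[_]; case: (cls j); case: (cls i).
by rewrite scaler_nat -sumr_const; apply: eq_bigl => j; rewrite inE.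
Qed.

Lemma rep_eq (R : realFieldType) (V : finType) (e : rel V) (cls : V -> bool) (p : R) i (d : nat) hh :
  (0 < d)%N -> degree e i = d -> local_homophily R e cls i = hh ->
  rep e cls p i = row_mx (feat p (cls i))
     ((hh * d%:R) *: feat p (cls i) + (d%:R - hh * d%:R) *: feat p (~~ cls i)).
Proof.
move=> d0 Hd Hh; rewrite /rep sum_feat.
have Hc : (#|[set j in nbrs e i | cls j == cls i]| + #|[set j in nbrs e i | cls j != cls i]| = d)%N.
  rewrite -Hd /degree -(cardsID [set j | cls j == cls i] (nbrs e i)).
  by congr (_ + _)%N; apply: eq_card => j; rewrite !inE // andbC.
have Hs : hh * d%:R = #|[set j in nbrs e i | cls j == cls i]|%:R.
  rewrite -Hh /local_homophily Hd divfK //.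
  by rewrite pnatr_eq0 -lt0n.
rewrite Hs -Hc natrD.
by congr (row_mx _ (_ + _ *: _)); rewrite addrAC subrr add0r.
Qed.

Lemma colE (R : realFieldType) n (u0 u1 : 'rV[R]_n) (i : 'I_(1+1)) k :
  col_mx u0 u1 i k = if i == 0 :> nat then u0 0 k else u1 0 k.
Proof.
rewrite mxE; case: splitP => j; rewrite ord1 => -> //.
Qed.

Lemma colT (R : realFieldType) n (u0 u1 : 'rV[R]_n) (i : 'I_(1+1)) k :
  (col_mx u0 u1)^T k i = if i == 0 :> nat then u0 0 k else u1 0 k.
Proof. by rewrite mxE colE. Qed.

Lemma core (R : realFieldType) (p h ht dR : R) : 0 < p ->
  let x0 := feat p false in let x1 := feat p true in
  let u0 := row_mx x0 ((h*dR) *: x0 + (dR - h*dR) *: x1) in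
  let u1 := row_mx x1 ((h*dR) *: x1 + (dR - h*dR) *: x0) in
  let ut := row_mx x0 ((ht*dR) *: x0 + (dR - ht*dR) *: x1) in
  let Rm := col_mx u0 u1 in
  let D := 1 + dR ^+ 2 * (2 * h - 1) ^+ 2 in
  let w := D^-1 *: \row_(k < 2) (if k == 0 :> nat
                            then 1 + dR ^+ 2 * (2 * h - 1) * (h + ht - 1)
                            else dR ^+ 2 * (2 * h - 1) * (h - ht)) in
  ut *m (Rm^T *m invmx (Rm *m Rm^T) *m 1%:M) = w.
Proof.
move=> p0 x0 x1 u0 u1 ut Rm D w.
have D0 : D != 0.
  rewrite /D; apply/lt0r_neq0; apply: (@lt_le_trans _ _ 1) => //.
  by rewrite lerDl; apply: mulr_ge0; apply: sqr_ge0.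
have Heq : ut *m Rm^T = w *m (Rm *m Rm^T).
  apply/rowP => j; rewrite /w /ut /Rm /u0 /u1 /x0 /x1 /feat.
  rewrite !mxE !big_split_ord /= !big_ord_recr !big_ord0 /=.
  rewrite !colT ?colE !row_mxEl !row_mxEr !mxE /=.
  rewrite !big_split_ord /= !big_ord_recr !big_ord0 /=.
  rewrite !colT ?colE !row_mxEl !row_mxEr !mxE /=.
  case: j => [[|[|//]] Hj] /=; rewrite /D in D0 *; field => //; by rewrite exprMn.
have Hdet : \det (Rm *m Rm^T) = 2 * (1 + dR^+2) * (2 * p^+2 * D).
  rewrite det2 /Rm /u0 /u1 /x0 /x1 /feat.
  rewrite !mxE !big_split_ord /= !big_ord_recr !big_ord0 /=.
  rewrite !colT ?colE !row_mxEl !row_mxEr !mxE /=.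
  by rewrite /D; field.
have Hu : Rm *m Rm^T \in unitmx.
  rewrite unitmxE unitfE Hdet !mulf_neq0 // ?expf_neq0 //; apply/lt0r_neq0; nra.
by rewrite mulmx1 !mulmxA Heq mulmxK.
Qed.

Theorem theorem2 (R : realFieldType) (V : finType) (e : rel V) (cls : V -> bool)
  (Train : {set V}) (d : nat) (h p : R) (a b t : V) :
  simple_graph e ->
  (1 <= d)%N ->
  0 <= h <= 1 ->
  (exists k : nat, h * d%:R = k%:R) ->
  0 < p <= 1/2 ->
  (* standing assumption on the training set *)
  (forall i, i \in Train -> degree e i = d /\ local_homophily R e cls i = h) ->
  (* the training set contains nodes of both classes; a, b are such nodes *)
  a \in Train -> cls a = false ->
  b \in Train -> cls b = true ->
  (* test node of class 0 with degree d *)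
  cls t = false -> degree e t = d ->
  let ht := local_homophily R e cls t in
  let alpha := ht - h in
  let D := 1 + d%:R ^+ 2 * (2 * h - 1) ^+ 2 in
  let b1 := d%:R ^+ 2 * (2 * h - 1) / D in
  let z := rep e cls p t *m Wmin e cls p a b in
  z = onehot R false + b1 *: \row_(k < 2) (if k == 0 :> nat then alpha else - alpha)
  /\
  z = D^-1 *: \row_(k < 2) (if k == 0 :> nat
                            then 1 + d%:R ^+ 2 * (2 * h - 1) * (h + ht - 1)
                            else d%:R ^+ 2 * (2 * h - 1) * (h - ht)).
Proof.
move=> Hg d1 Hh Hk Hp HT Ha ca Hb cb ct dt ht alpha D b1 z.
have [da ha] := HT a Ha.
have [db hb] := HT b Hb.
have Hz : z = D^-1 *: \row_(k < 2) (if k == 0 :> nat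
                            then 1 + d%:R ^+ 2 * (2 * h - 1) * (h + ht - 1)
                            else d%:R ^+ 2 * (2 * h - 1) * (h - ht)).
  rewrite /z /Wmin /Rmat (@rep_eq _ _ e cls p a d h d1 da ha) (@rep_eq _ _ e cls p b d h d1 db hb) (@rep_eq _ _ e cls p t d ht d1 dt erefl).
  rewrite ca cb ct /=.
  case/andP: Hp => p0 _.
  exact: (@core _ p h ht d%:R p0).
split => //.
rewrite Hz; apply/rowP => k; rewrite !mxE.
have D0 : D != 0.
  rewrite /D; apply/lt0r_neq0; apply: (@lt_le_trans _ _ 1) => //.
  by rewrite lerDl; apply: mulr_ge0; apply: sqr_ge0.
case: k => [[|[|//]] Hk'] /=; rewrite /b1 /alpha; rewrite /D in D0 *; field => //; by rewrite exprMn.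
Qed.
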